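(* The $\mathcal{P}_+$-coadjoint orbit through $dT$ coincides with the affine subspace $dT+\mathfrak{U}_-^*\subset\mathfrak{b}_k^*$.
   Context: Let $\mathfrak{g}=\mathfrak{gl}_n(\mathbb{C})$, $\mathfrak{t}$ a Cartan subalgebra, $k>1$, $T=\sum_{i=1}^{k-1}T_iz^{-i}$, $T_i\in\mathfrak{t}$, $T_{k-1}\ne0$, $dT=\sum_i(-iT_i)z^{-i-1}dz$. $B_k=\{\sum_{i=0}^{k-1}b_iz^i:b_0=1,b_i\in\mathfrak{g}\}\subset\mathrm{GL}_n(\mathbb{C}[z]/(z^k))$; $\mathfrak{b}_k^*=\{\sum_{i=1}^{k-1}X_iz^{-i-1}dz:X_i\in\mathfrak{g}\}$ via $\mathrm{res}_{z=0}\mathrm{tr}$; coadjoint action $\mathrm{Ad}^*_bB$ = part of $bBb^{-1}$ in degrees $z^{-i-1}dz$, $1\le i\le k-1$. For $i=0,\dots,k-2$, $\mathbb{C}^n=\bigoplus_{p\in J_i}V^{(i)}_p$ is the decomposition into simultaneous eigenspaces of $(T_{i+1},\dots,T_{k-1})$, $\pi_i:J_j\to J_i$ natural; total orders on the $J_i$ fixed with $\pi_{i+1}(p)<\pi_{i+1}(q)\Rightarrow p<q$. $\mathfrak{p}_i^+=\bigoplus_{p\ge q}\mathrm{Hom}(V^{(i)}_p,V^{(i)}_q)$, $\mathfrak{u}_i^+=\bigoplus_{p>q}\mathrm{Hom}(V^{(i)}_p,V^{(i)}_q)$, $\mathfrak{p}^+_{k-1}=\mathfrak{g}$, $\mathfrak{u}^+_{k-1}=0$.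 $\mathcal{P}_+=\{b\in B_k:b_i\in\mathfrak{p}_i^+\ (1\le i\le k-1)\}$ (a subgroup), $\mathfrak{U}_-^*=\{\sum_{i=1}^{k-1}X_iz^{-i-1}dz:X_i\in\mathfrak{u}_i^+\}$. *)

(* Defs.v *)
From HB Require Import structures.
From mathcomp Require Import Rstruct.
From mathcomp Require Import all_boot all_order all_algebra.
From mathcomp Require Import complex.
Set Implicit Arguments. Unset Strict Implicit. Unset Printing Implicit Defensive.
Import Order.TTheory GRing.Theory Num.Theory.
Local Open Scope ring_scope.

Definition C : Type := (Rdefinitions.R)[i].

Section Defs.
Variables (n k : nat).

(* Truncated power series / Laurent coefficient sequences with values in gl_n(C). *)
Definition series := nat -> 'M[C]_n.

Definition sone : series := fun l => if l == 0%N then 1%:M else 0.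

Definition smul (a c : series) : series :=
  fun l => \sum_(j < l.+1) a j *m c (l - j)%N.

(* inverse of b in GL_n(C[z]/(z^k)) when b_0 = 1:  b^{-1} = sum_{m<k} (1-b)^m  (mod z^k) *)
Definition sinv (b : series) : series :=
  fun l => \sum_(m < k) (iter m (smul (fun l => sone l - b l)) sone) l.

(* coadjoint action of b in B_k on B = sum_{i=1}^{k-1} X_i z^{-i-1} dz in b_k^*:
   the coefficient of z^{-i-1}dz in b B b^{-1}, i.e. sum_{p+q+i<=k-1} b_p X_{i+p+q} c_q. *)
Definition coad (b X : series) : series :=
  fun i => \sum_(p < k) \sum_(q < k)
     let p := nat_of_ord p in let q := nat_of_ord q in
     (if (p + q + i < k)%N then b p *m X (i + p + q)%N *m sinv b q else 0).

(* The Cartan subalgebra t = P (diagonal matrices) P^{-1};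
   T_m = P diag(D m) P^{-1}. *)
Variables (P : 'M[C]_n) (D : nat -> 'rV[C]_n).

Definition Tm (m : nat) : 'M[C]_n := P *m diag_mx (D m) *m invmx P.

(* dT = sum_i (-i T_i) z^{-i-1} dz *)
Definition dT : series := fun i => - (i%:R) *: Tm i.

(* tuple of simultaneous eigenvalues of (T_{i+1},...,T_{k-1}) on the j-th
   eigenvector (j-th column of P) *)
Definition tup (i : nat) (j : 'I_n) : seq C :=
  [seq D m 0 j | m <- iota i.+1 (k - i.+1)].

Definition J (i : nat) : seq (seq C) := [seq tup i j | j <- enum 'I_n].

Definition total_order_on (S : seq (seq C)) (le : rel (seq C)) : Prop :=
  [/\ forall p, p \in S -> le p p,
      forall p q, p \in S -> q \in S -> le p q -> le q p -> p = q,
      forall p q r, p \in S -> q \in S -> r \in S -> le p q -> le q r -> le p r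
    & forall p q, p \in S -> q \in S -> le p q || le q p].

Definition strict (le : rel (seq C)) : rel (seq C) := fun p q => le p q && (p != q).

Variable le : nat -> rel (seq C).

(* p_i^+ = ⊕_{p >= q} Hom(V_p^{(i)}, V_q^{(i)}) ; p_{k-1}^+ = g.
   In the eigenbasis (columns of P), the (r,c) entry is a map V_{tup c} -> V_{tup r}. *)
Definition pplus (i : nat) (A : 'M[C]_n) : bool :=
  if (i < k.-1)%N then
    [forall r : 'I_n, forall c : 'I_n,
       ((invmx P *m A *m P) r c != 0) ==> le i (tup i r) (tup i c)]
  else true.

(* u_i^+ = ⊕_{p > q} Hom(V_p^{(i)}, V_q^{(i)}) ; u_{k-1}^+ = 0. *)
Definition uplus (i : nat) (A : 'M[C]_n) : bool :=
  if (i < k.-1)%N then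
    [forall r : 'I_n, forall c : 'I_n,
       ((invmx P *m A *m P) r c != 0) ==> strict (le i) (tup i r) (tup i c)]
  else A == 0.

Definition inPplus (b : series) : Prop :=
  b 0%N = 1%:M /\ forall i, (0 < i < k)%N -> pplus i (b i).

End Defs.

(* Main.v *)
Require Import Defs.
From HB Require Import structures.
From mathcomp Require Import Rstruct.
From mathcomp Require Import all_boot all_order all_algebra.
From mathcomp Require Import complex.
From mathcomp Require Import zify ring.
Import Order.TTheory GRing.Theory Num.Theory.
Local Open Scope ring_scope.
Set Implicit Arguments. Unset Strict Implicit. Unset Printing Implicit Defensive.
Lemma conv (V : zmodType) (K1 K2 N : nat) (g : nat -> nat -> V) :
  (N <= K1)%N -> (N <= K2)%N ->
  \sum_(q < K1) \sum_(q' < K2) (if (q' + q < N)%N then g q' q else 0)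
  = \sum_(m < N) \sum_(q' < m.+1) g q' (m - q')%N.
Proof.
elim: N => [|N IH] h1 h2.
  by rewrite big_ord0; apply: big1 => q _; apply: big1 => q' _.
rewrite big_ord_recr -IH ?(ltnW h1) ?(ltnW h2) //.
have -> : \sum_(q < K1) \sum_(q' < K2) (if (q' + q < N.+1)%N then g q' q else 0)
  = \sum_(q < K1) \sum_(q' < K2) (if (q' + q < N)%N then g q' q else 0)
     + \sum_(q < K1) \sum_(q' < K2) (if (q' + q == N)%N then g q' q else 0).
  rewrite -big_split /=; apply: eq_bigr => q _; rewrite -big_split /=; apply: eq_bigr => q' _ /=.
  rewrite ltnS leq_eqVlt; case: eqP => [->|_] /=; first by rewrite ltnn add0r.
  by rewrite addr0.
congr (_ + _).
rewrite exchange_big /=.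
rewrite [RHS](big_ord_widen K2 (fun q' => g q' (N - q')%N) h2) [RHS]big_mkcond /=.
apply: eq_bigr => q' _.
case: (ltnP q' N.+1) => hq.
  have hN : (N - q' < K1)%N by apply: leq_ltn_trans h1; rewrite leq_subr.
  rewrite (bigD1 (Ordinal hN)) //= subnKC ?eqxx //.
  rewrite big1 ?addr0 // => q /eqP hne; case: eqP => // hh.
  by exfalso; apply: hne; apply: val_inj => /=; rewrite -hh addKn.
apply: big1 => q _; case: eqP => // hh; exfalso.
by move: hq; rewrite -hh; lia.
Qed.
Section PolyPart.
Variables (n' k : nat).
Local Notation n := n'.+1.
Local Notation R := 'M[C]_n.
Definition pol (s : series n) : {poly R} := \poly_(j < k) s j.

Lemma smul_coef (x y : series n) l : (l < k)%N -> smul x y l = (pol x * pol y)`_l.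
Proof.
move=> lk; rewrite coefM /smul; apply: eq_bigr => j _.
have jl : (j <= l)%N by rewrite -ltnS.
rewrite !coef_poly (leq_ltn_trans jl lk) (leq_ltn_trans (leq_subr _ _) lk).
by rewrite mulmxE.
Qed.

Lemma coefM_eqr (p q q' : {poly R}) l :
  (forall j, (j <= l)%N -> q`_j = q'`_j) -> (p * q)`_l = (p * q')`_l.
Proof.
move=> h; rewrite !coefM; apply: eq_bigr => j _; rewrite h // leq_subr //.
Qed.

Lemma coefM_eql (p p' q : {poly R}) l :
  (forall j, (j <= l)%N -> p`_j = p'`_j) -> (p * q)`_l = (p' * q)`_l.
Proof.
move=> h; rewrite !coefM; apply: eq_bigr => j _; rewrite h // -ltnS //.
Qed.

Variable b : series n.
Hypothesis b0 : b 0%N = 1%:M.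
Hypothesis k0 : (0 < k)%N.

Definition aa : series n := fun l => sone n l - b l.

Lemma pw_coef m l : (l < k)%N -> iter m (smul aa) (sone n) l = ((pol aa) ^+ m)`_l.
Proof.
elim: m l => [|m IH] l lk /=.
  by rewrite expr0 coefC /sone.
rewrite exprS smul_coef //; apply: coefM_eqr => j jl.
rewrite coef_poly (leq_ltn_trans jl lk) IH //.
exact: (leq_ltn_trans jl lk).
Qed.

Lemma aa0 : (pol aa)`_0 = 0.
Proof. by rewrite coef_poly k0 /aa /sone /= b0 subrr. Qed.

Lemma Ak0 m l : (l < m)%N -> ((pol aa) ^+ m)`_l = 0.
Proof.
elim: m l => [|m IH] l // lm.
rewrite exprS coefM; apply: big1 => j _.
case: (posnP j) => [j0|jp]; first by rewrite j0 aa0 mul0r.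
rewrite IH ?mulr0 //.
have := ltn_ord j; lia.
Qed.

Lemma polb : pol b = 1 - pol aa.
Proof.
apply/polyP => j; rewrite coefB coefC !coef_poly /aa /sone.
case: ifP => jk.
  have [j0|jn] := eqVneq j 0%N; last by rewrite sub0r opprB subr0.
  by rewrite j0 b0 subrr subr0.
have -> : (j == 0%N) = false by apply/eqP => j0; rewrite j0 k0 in jk.
by rewrite subr0.
Qed.

Definition GG := \sum_(m < k) (pol aa) ^+ m.

Lemma sinv_coef l : (l < k)%N -> sinv k b l = GG`_l.
Proof.
move=> lk; rewrite /sinv /GG coef_sum; apply: eq_bigr => m _.
by rewrite pw_coef.
Qed.

Lemma GGb : GG * pol b = 1 - (pol aa) ^+ k.
Proof.
rewrite polb mulrBr mulr1 /GG mulr_suml.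
have -> : \sum_(i < k) pol aa ^+ i * pol aa = \sum_(i < k) pol aa ^+ i.+1.
  by apply: eq_bigr => i _; rewrite exprSr.
rewrite -sumrB.
rewrite (eq_bigr (fun i : 'I_k => - ((pol aa ^+ i.+1) - pol aa ^+ i))); last first.
  by move=> i _; rewrite opprB.
rewrite sumrN -(big_mkord xpredT (fun i => pol aa ^+ i.+1 - pol aa ^+ i)).
by rewrite telescope_sumr // expr0 opprB.
Qed.

Lemma sinv_inv m : (m < k)%N -> smul (sinv k b) b m = sone n m.
Proof.
move=> mk; rewrite smul_coef //.
rewrite (@coefM_eql _ GG); last first.
  move=> j jm; rewrite coef_poly (leq_ltn_trans jm mk) sinv_coef //.
  exact: (leq_ltn_trans jm mk).
rewrite GGb coefB coefC Ak0 // subr0 /sone.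
by case: (m == 0%N).
Qed.


Lemma L2 (X : series n) i : (0 < i < k)%N ->
  \sum_(q < k - i) coad k b X (i + q) *m b q = \sum_(p < k - i) b p *m X (i + p).
Proof.
case/andP => i0 ik.
set c := sinv k b.
have E1 : \sum_(q < k - i) coad k b X (i + q) *m b q =
  \sum_(p < k) b p *m \sum_(q < k - i) \sum_(q' < k)
     (if (q' + q < k - i - p)%N then X (i + p + (q' + q))%N *m c q' *m b q else 0).
  rewrite /coad.
  under eq_bigr => q _ do rewrite mulmx_suml.
  under eq_bigr => q _ do under eq_bigr => p _ do rewrite mulmx_suml.
  rewrite exchange_big /=; apply: eq_bigr => p _; rewrite mulmx_sumr; apply: eq_bigr => q _.
  rewrite mulmx_sumr; apply: eq_bigr => q' _ /=.
  case: ifP => h1; case: ifP => h2.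
  - have -> : (i + q + p + q' = i + p + (q' + q))%N by lia.
    by rewrite !mulmxA.
  - by exfalso; move: h1 h2; lia.
  - by exfalso; move: h1 h2; lia.
  - by rewrite mul0mx mulmx0.
rewrite E1.
transitivity (\sum_(p < k) b p *m (if (p < k - i)%N then X (i + p)%N else 0)).
  apply: eq_bigr => p _; congr (_ *m _).
  rewrite (@conv _ (k - i) k (k - i - p) (fun q' q => X (i + p + (q' + q))%N *m c q' *m b q));
    last (by apply: leq_trans (leq_subr _ _) (leq_subr _ _)); last by rewrite leq_subr.
  transitivity (\sum_(m < k - i - p) X (i + p + m)%N *m sone n m).
    apply: eq_bigr => m _; rewrite -(sinv_inv (m := m)); last by have := ltn_ord m; lia.
    rewrite /smul mulmx_sumr; apply: eq_bigr => q' _.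
    have hq : (q' <= m)%N by rewrite -ltnS.
    by rewrite subnKC // mulmxA.
  case: ifP => hp.
    have -> : (k - i - p = (k - i - p - 1).+1)%N by lia.
    rewrite big_ord_recl /= addn0 /sone eqxx mulmx1 big1 ?addr0 // => m _.
    by rewrite mulmx0.
  have -> : (k - i - p = 0)%N by lia.
  by rewrite big_ord0.
rewrite (big_ord_widen k (fun p => b p *m X (i + p)%N) (leq_subr i k)) [RHS]big_mkcond.
apply: eq_bigr => p _; case: ifP => _ //; by rewrite mulmx0.
Qed.

End PolyPart.
Lemma L3 (m k : nat) (b Y Y' F : series m) : b 0%N = 1%:M ->
 (forall i, (0 < i < k)%N -> \sum_(q < k - i) Y (i + q)%N *m b q = F i) ->
 (forall i, (0 < i < k)%N -> \sum_(q < k - i) Y' (i + q)%N *m b q = F i) ->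
 forall i, (0 < i < k)%N -> Y i = Y' i.
Proof.
move=> b0 hY hY'.
suff H : forall d i, (0 < i < k)%N -> (k - i <= d)%N -> Y i = Y' i.
  by move=> i hi; apply: (H k) => //; rewrite leq_subr.
elim=> [|d IH] i hi hd; first by exfalso; move: hi hd; lia.
have e1 := hY i hi; have e2 := hY' i hi.
have ek : (k - i = (k - i - 1).+1)%N by move: hi; lia.
move: e1 e2; rewrite ek !big_ord_recl /= !addn0 b0 !mulmx1 => e1 e2.
set S := \sum_(q < _) _ in e1; set S' := \sum_(q < _) _ in e2.
have hS : S = S'.
  rewrite /S /S'; apply: eq_bigr => q _; congr (_ *m _); apply: IH.
    by have := ltn_ord q; move: hi; rewrite /bump /=; lia.
  by have := ltn_ord q; move: hi hd; rewrite /bump /=; lia.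
by apply: (addIr S); rewrite e1 hS e2.
Qed.
Lemma zmod_iff (V : zmodType) (a x s1 s2 : V) : a + s1 = x + s2 <-> a - x = s2 - s1.
Proof.
split => hh.
  have -> : a = x + s2 - s1 by rewrite -hh addrK.
  by rewrite addrAC [x + s2 - x]addrAC subrr add0r.
by rewrite -[a](subrK x) hh addrAC subrK addrC.
Qed.

Lemma EQ (m k : nat) (b X Y : series m) i : b 0%N = 1%:M -> (0 < i < k)%N ->
 (\sum_(q < k - i) Y (i + q)%N *m b q = \sum_(p < k - i) b p *m X (i + p)%N) <->
 (Y i - X i = \sum_(q < k - i - 1) (b q.+1 *m X (i + q.+1)%N - X (i + q.+1)%N *m b q.+1
      - (Y (i + q.+1)%N - X (i + q.+1)%N) *m b q.+1)).
Proof.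
move=> b0 hi; have ek : (k - i = (k - i - 1).+1)%N by lia.
set N := (k - i - 1)%N in ek *.
rewrite ek !big_ord_recl !addn0 b0 mulmx1 mul1mx zmod_iff -sumrB.
rewrite (eq_bigr (fun q : 'I_N => b q.+1 *m X (i + q.+1)%N - X (i + q.+1)%N *m b q.+1
      - (Y (i + q.+1)%N - X (i + q.+1)%N) *m b q.+1)) //.
by move=> q _; rewrite lift0 mulmxBl opprB addrA subrK.
Qed.

Lemma sum_neq0 (V : zmodType) m (F : 'I_m -> V) : \sum_(j < m) F j != 0 -> exists j, F j != 0.
Proof.
move=> H; case: (pickP (fun j => F j != 0)) => [j hj|h0]; first by exists j.
by move/eqP: H; case; apply: big1 => j _; apply/eqP; move: (h0 j) => /negbFE.
Qed.

Lemma subE m (A B : 'M[C]_m) r c : (A - B) r c = A r c - B r c.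
Proof. by rewrite !mxE. Qed.

Lemma mulE m (A B : 'M[C]_m) r c : (A *m B) r c = \sum_s A r s * B s c.
Proof. by rewrite !mxE. Qed.

Lemma subr_neq0_or (x y : C) : x - y != 0 -> x != 0 \/ y != 0.
Proof.
move=> H; case: (eqVneq x 0) => [x0|]; last by left.
by right; move: H; rewrite x0 sub0r oppr_eq0.
Qed.
Section Orders.
Variables (n k : nat) (D : nat -> 'rV[C]_n) (le : nat -> rel (seq C)).
Hypothesis hk : (1 < k)%N.
Hypothesis Htot : forall i, (i < k.-1)%N -> total_order_on (J k D i) (le i).
Hypothesis Hcomp : forall i, (i.+1 < k.-1)%N -> forall p q, p \in J k D i -> q \in J k D i ->
      strict (le i.+1) (behead p) (behead q) -> strict (le i) p q.

Local Notation T j r := (tup k D j r).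

Lemma tupS j r : tup k D j.+1 r = behead (tup k D j r).
Proof.
rewrite /tup; case: (ltnP j.+1 k) => h.
  have -> : (k - j.+1 = (k - j.+2).+1)%N by lia.
  by [].
have -> : (k - j.+1 = 0)%N by lia.
by have -> : (k - j.+2 = 0)%N by lia.
Qed.

Lemma tupE j r c : T j r = T j c <-> (forall m, (j < m < k)%N -> D m 0 r = D m 0 c).
Proof.
rewrite /tup; split.
  move/eq_in_map => H m hm; apply: H; rewrite mem_iota; lia.
by move=> H; apply/eq_in_map => m; rewrite mem_iota => hm; apply: H; lia.
Qed.

Fixpoint hh (r c : 'I_n) (m : nat) : nat :=
  if m is m'.+1 then (if D m' 0 r != D m' 0 c then m' else hh r c m') else 0%N.

Lemma hh_lt r c m : (0 < m)%N -> (hh r c m < m)%N.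
Proof.
elim: m => // m IH _ /=; case: ifP => // _.
case: m IH => // m IH; have := IH isT; lia.
Qed.

Lemma hh_above r c m j : (hh r c m < j < m)%N -> D j 0 r = D j 0 c.
Proof.
elim: m => [|m IH] /=; first by lia.
case: ifP => hd hj; first by lia.
have [->|jm] := eqVneq j m; first by apply/eqP; move/negbFE: hd.
by apply: IH; move: hj jm; lia.
Qed.

Lemma hh_pos r c m : (0 < hh r c m)%N -> D (hh r c m) 0 r != D (hh r c m) 0 c.
Proof. elim: m => //= m IH; case: ifP => // hd; exact: IH. Qed.

Lemma hh_ge r c m j : (j < m)%N -> D j 0 r != D j 0 c -> (j <= hh r c m)%N.
Proof.
elim: m => // m IH jm hd /=; case: ifP => hd'; first by lia.
have [ejm|jm'] := eqVneq j m; first by rewrite -ejm hd in hd'.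
by apply: IH => //; move: jm jm'; lia.
Qed.

Definition h r c := hh r c k.

Lemma h_lt r c : (h r c < k)%N.
Proof. by apply: hh_lt; lia. Qed.

Lemma h_above r c j : (h r c < j < k)%N -> D j 0 r = D j 0 c.
Proof. exact: hh_above. Qed.

Lemma h_pos r c : (0 < h r c)%N -> D (h r c) 0 r != D (h r c) 0 c.
Proof. exact: hh_pos. Qed.

Lemma h_ge r c j : (j < k)%N -> D j 0 r != D j 0 c -> (j <= h r c)%N.
Proof. exact: hh_ge. Qed.

Lemma Teq j r c : T j r = T j c <-> (h r c <= j)%N.
Proof.
rewrite tupE; split.
  move=> H; rewrite leqNgt; apply/negP => jh.
  have := h_pos (leq_ltn_trans (leq0n j) jh); rewrite H ?eqxx //.
  by rewrite jh h_lt.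
by move=> hj m hm; apply: h_above; move: hm; lia.
Qed.

Lemma memJ i r : T i r \in J k D i.
Proof. by rewrite /J; apply: map_f; rewrite mem_enum. Qed.

Lemma Kdown i j r c : (i <= j)%N -> (j < k.-1)%N ->
  strict (le j) (T j r) (T j c) -> strict (le i) (T i r) (T i c).
Proof.
elim: j => [|j IH] hij hj hs; first by have -> : i = 0%N by lia.
have [->|ij] := eqVneq i j.+1; first by [].
apply: IH; [lia | lia |].
apply: Hcomp; [lia | exact: memJ | exact: memJ |].
by rewrite -!tupS.
Qed.

Lemma Ktot i r c : (i < k.-1)%N -> T i r != T i c ->
  strict (le i) (T i r) (T i c) || strict (le i) (T i c) (T i r).
Proof.
move=> hi hne; have [_ _ _ tot] := Htot hi.
rewrite /strict hne eq_sym hne !andbT; apply: tot; exact: memJ.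
Qed.

Lemma Kanti i r c : (i < k.-1)%N -> strict (le i) (T i r) (T i c) ->
  strict (le i) (T i c) (T i r) -> False.
Proof.
move=> hi /andP [h1 h2] /andP [h3 _]; have [_ anti _ _] := Htot hi.
by move/eqP: h2; apply; apply: anti => //; exact: memJ.
Qed.

Lemma Ktrans i r s c : (i < k.-1)%N -> strict (le i) (T i r) (T i s) ->
  strict (le i) (T i s) (T i c) -> strict (le i) (T i r) (T i c).
Proof.
move=> hi /andP [h1 h2] /andP [h3 h4]; have [_ anti tr _] := Htot hi.
rewrite /strict (tr _ _ _ (memJ _ _) (memJ _ _) (memJ _ _) h1 h3) /=.
apply/eqP => erc; move: h3; rewrite -erc => h3.
by move/eqP: h2; apply; apply: anti => //; exact: memJ.
Qed.

Definition Up r c := strict (le 0) (T 0 r) (T 0 c).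
Definition G i r c := (i < k.-1)%N && strict (le i) (T i r) (T i c).
Definition Al p r c := (h r c <= p)%N || Up r c.

Lemma k1 : (0 < k.-1)%N.
Proof. by lia. Qed.

Lemma GE i r c : G i r c = Up r c && (i < h r c)%N.
Proof.
apply/idP/idP.
  case/andP => hi hs; have hne : T i r != T i c by case/andP: hs.
  apply/andP; split; first exact: (Kdown (leq0n i) hi hs).
  by rewrite ltnNge; apply/negP => /Teq; apply/eqP.
case/andP => hu hih.
have hi : (i < k.-1)%N by have := h_lt r c; lia.
rewrite /G hi /=.
have hne : T i r != T i c by apply/eqP => /Teq; lia.
case/orP: (Ktot hi hne) => // hs.
by exfalso; apply: (Kanti k1 hu); apply: (Kdown (leq0n i) hi hs).
Qed.

Lemma Gmono i j r c : (i <= j)%N -> G j r c -> G i r c.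
Proof.
move=> hij /andP [hj hs]; rewrite /G (leq_ltn_trans hij hj) /=.
exact: (Kdown hij hj hs).
Qed.

Lemma F1 p i r c : (0 < i)%N -> Al p r c -> (0 < p)%N -> (i + p < k)%N ->
  D (i + p) 0 r != D (i + p) 0 c -> G i r c.
Proof.
move=> hi hal hp hip hd.
have hh1 := h_ge hip hd.
rewrite GE; case/orP: hal => [hl|->] /=; first by lia.
by lia.
Qed.

Lemma F2 i q r s c : G (i + q) r s -> Al q s c -> G i r c.
Proof.
move=> hG hal; apply: (@Gmono i (i + q)); first by rewrite leq_addr.
case/andP: (hG) => hL hs; rewrite /G hL /=.
have [esc|nsc] := eqVneq (T (i + q) s) (T (i + q) c).
  by rewrite -esc.
case/orP: hal => [hq|hu].
  by exfalso; move/eqP: nsc; apply; apply/Teq; lia.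
have hsc : G (i + q) s c by rewrite GE hu /=; rewrite ltnNge; apply/negP => /Teq; apply/eqP.
by case/andP: hsc => _ hsc; exact: (Ktrans hL hs hsc).
Qed.

Lemma Up_trans r s c : Up r s -> Up s c -> Up r c.
Proof. exact: Ktrans k1. Qed.

Lemma Up_irr r : ~~ Up r r.
Proof. by rewrite /Up /strict eqxx andbF. Qed.

Definition rank r := #|[set s | Up r s]|.

Lemma rank_lt r s : Up r s -> (rank s < rank r)%N.
Proof.
move=> hrs; apply: proper_card; apply/properP; split.
  by apply/subsetP => t; rewrite !inE => hst; exact: Up_trans hrs hst.
by exists s; rewrite !inE ?hrs ?Up_irr.
Qed.

Lemma rank_n r : (rank r < n)%N.
Proof.
rewrite -[X in (_ < X)%N]card_ord; apply: proper_card; apply/properP; split.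
  exact: subset_predT.
by exists r; rewrite ?inE ?Up_irr.
Qed.

Lemma Up_h r c : Up r c -> (0 < h r c)%N.
Proof.
move=> /andP [_ hne]; rewrite lt0n; apply/negP => /eqP h0.
by move/eqP: hne; apply; apply/Teq; rewrite h0.
Qed.


Definition dg m : 'M[C]_n := - (m%:R) *: diag_mx (D m).
Definition dd m (j : 'I_n) : C := - (m%:R) * D m 0 j.

Lemma commE (A : 'M[C]_n) m r c : (A *m dg m - dg m *m A) r c = A r c * (dd m c - dd m r).
Proof.
rewrite subE /dg -scalemxAr -scalemxAl mul_mx_diag mul_diag_mx !mxE /dd.
by ring.
Qed.

Lemma FW (b Y : series n) : b 0%N = 1%:M ->
  (forall p, (0 < p < k)%N -> forall r c, b p r c != 0 -> Al p r c) ->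
  (forall i, (0 < i < k)%N -> \sum_(q < k - i) Y (i + q)%N *m b q = \sum_(p < k - i) b p *m dg (i + p)%N) ->
  forall i, (0 < i < k)%N -> forall r c, (Y i - dg i) r c != 0 -> G i r c.
Proof.
move=> b0 hAl hid.
suff H : forall d i, (0 < i < k)%N -> (k - i <= d)%N ->
    forall r c, (Y i - dg i) r c != 0 -> G i r c.
  by move=> i hi; apply: (H k) => //; rewrite leq_subr.
elim=> [|d IH] i hi hd r c; first by exfalso; move: hi hd; lia.
rewrite ((@EQ n k b dg Y i b0 hi).1 (hid i hi)) summxE => /sum_neq0 [q].
rewrite subE commE => /subr_neq0_or [|].
  rewrite mulf_eq0 negb_or => /andP [hb hdd].
  apply: (@F1 q.+1) => //.
  - by case/andP: hi.
  - by apply: hAl => //; have := ltn_ord q; move: hi; lia.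
  - by have := ltn_ord q; move: hi; lia.
  apply/eqP => hD; move/eqP: hdd; apply; by rewrite /dd hD subrr.
rewrite mulE => /sum_neq0 [s]; rewrite mulf_eq0 negb_or => /andP [hZ hb].
have hj : (0 < i + q.+1 < k)%N by have := ltn_ord q; move: hi; lia.
have hG := IH _ hj ltac:(have := ltn_ord q; move: hi hd; lia) r s hZ.
apply: (F2 hG); apply: hAl => //.
by have := ltn_ord q; move: hi; lia.
Qed.

Lemma sum_cut (V : zmodType) (N p : nat) (f : nat -> V) : (p <= N)%N ->
  (forall q, (p <= q < N)%N -> f q = 0) -> \sum_(q < N) f q = \sum_(q < p) f q.
Proof.
move=> pN hz; rewrite (big_ord_widen N f pN) [RHS]big_mkcond; apply: eq_bigr => q _.
by case: ifP => // hq; rewrite hz //; rewrite ltn_ord andbT leqNgt hq.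
Qed.

Section BWsec.
Variable W : series n.
Hypothesis hW : forall i, (0 < i < k)%N -> forall r c, (W i - dg i) r c != 0 -> G i r c.

Definition Zf i r c := (W i - dg i) r c.
Definition del m (r c : 'I_n) := dd m c - dd m r.
Definition Sf (u : nat -> 'I_n -> 'I_n -> C) i r c :=
  \sum_(q < k - i - 1) \sum_s Zf (i + q.+1)%N r s * u q.+1 s c.
Definition Lf (u : nat -> 'I_n -> 'I_n -> C) p i r c :=
  \sum_(q < p.-1) u q.+1 r c * del (i + q.+1)%N r c.
Definition act p r c := Up r c && (0 < p < h r c)%N.
Definition Gf (u : nat -> 'I_n -> 'I_n -> C) p r c : C :=
  if act p r c then (Zf (h r c - p)%N r c + Sf u (h r c - p)%N r c - Lf u p (h r c - p)%N r c)
     / del (h r c) r c else 0.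
Definition uN N := iter N Gf (fun _ _ _ => 0).

Lemma uN_inact N p r c : ~~ act p r c -> uN N p r c = 0.
Proof. by case: N => [|N] //= hna; rewrite /Gf (negbTE hna). Qed.

Lemma Zf_G i r c : (0 < i < k)%N -> Zf i r c != 0 -> Up r c && (i < h r c)%N.
Proof. by move=> hi hz; rewrite -GE; apply: hW. Qed.

Lemma uN_stab N p r c : (rank r * k + p < N)%N -> uN N.+1 p r c = uN N p r c.
Proof.
elim: N p r c => // N IH p r c hdep.
have e1 : uN N.+2 p r c = Gf (uN N.+1) p r c := erefl.
have e2 : uN N.+1 p r c = Gf (uN N) p r c := erefl.
rewrite e1 e2 /Gf; case: ifP => // /andP [hu /andP [hp hph]].
congr (_ / _); congr (_ + _ - _).
  rewrite /Sf; apply: eq_bigr => q _; apply: eq_bigr => s _.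
  have [->|hz] := eqVneq (Zf (h r c - p + q.+1)%N r s) 0; first by rewrite !mul0r.
  have hq := ltn_ord q; have hhk := h_lt r c.
  have hi' : (0 < h r c - p + q.+1 < k)%N by lia.
  case/andP: (Zf_G hi' hz) => hrs _.
  have hrk := rank_lt hrs.
  by rewrite IH //; nia.
rewrite /Lf; apply: eq_bigr => q _; have hq := ltn_ord q.
by rewrite IH //; lia.
Qed.

Definition ustar := uN (n * k).

Lemma ustar_fix p r c : Gf ustar p r c = ustar p r c.
Proof.
case: (boolP (act p r c)) => ha; last by rewrite /Gf (negbTE ha) /ustar uN_inact.
rewrite -[Gf ustar p r c]/(uN (n * k).+1 p r c) uN_stab //.
case/andP: ha => _ /andP [_ hph]; have := h_lt r c; have := rank_n r; nia.
Qed.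

Lemma ustar_act p r c : ustar p r c != 0 -> act p r c.
Proof. by apply: contraR => hna; rewrite /ustar uN_inact. Qed.

Definition bst (p : nat) : 'M[C]_n := if p == 0%N then 1%:M else \matrix_(r, c) ustar p r c.

Lemma bstE p r c : (0 < p)%N -> bst p r c = ustar p r c.
Proof. by case: p => // p _; rewrite /bst /= mxE. Qed.

Lemma del_above i r c : (h r c < i < k)%N -> del i r c = 0.
Proof. by move=> hi; rewrite /del /dd (h_above hi) subrr. Qed.

Lemma del_h r c : Up r c -> del (h r c) r c != 0.
Proof.
move=> hu; have hp := Up_h hu; have hd := h_pos hp.
rewrite /del /dd -mulrBr mulf_neq0 // ?oppr_eq0 ?pnatr_eq0 -?lt0n // subr_eq0 eq_sym //.
Qed.

Lemma bst_id i : (0 < i < k)%N ->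
  \sum_(q < k - i) W (i + q)%N *m bst q = \sum_(p < k - i) bst p *m dg (i + p)%N.
Proof.
move=> hi; apply/(@EQ n k bst dg W i erefl hi); apply/matrixP => r c.
rewrite summxE -/(Zf i r c).
rewrite (eq_bigr (fun q : 'I_(k - i - 1) => ustar q.+1 r c * del (i + q.+1)%N r c
     - \sum_s Zf (i + q.+1)%N r s * ustar q.+1 s c)); last first.
  move=> q _; rewrite subE commE bstE // mulE; congr (_ - _).
  by apply: eq_bigr => s _; rewrite bstE.
rewrite sumrB -/(Sf ustar i r c).
case: (boolP (Up r c && (i < h r c)%N)) => hact.
  case/andP: hact => hu hih.
  have hhk := h_lt r c.
  set p := (h r c - i)%N.
  have hpa : act p r c by rewrite /act hu /p; apply/andP; split; lia.
  have hpi : (h r c - p = i)%N by rewrite /p; lia.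
  have := ustar_fix p r c; rewrite /Gf hpa hpi => hfix.
  have hpN : (p <= k - i - 1)%N by rewrite /p; lia.
  have hzq : forall q, (p <= q < k - i - 1)%N -> ustar q.+1 r c * del (i + q.+1)%N r c = 0.
    by move=> q hq; rewrite del_above ?mulr0 //; rewrite /p in hq; lia.
  rewrite (@sum_cut _ _ p (fun q => ustar q.+1 r c * del (i + q.+1)%N r c) hpN hzq).
  have ep : p = (p.-1).+1 by rewrite /p; lia.
  rewrite [in X in _ = X - _]ep big_ord_recr /= -/(Lf ustar p i r c) -ep.
  have -> : (i + p)%N = h r c by rewrite /p; lia.
  rewrite -hfix divfK ?del_h //.
  by ring.
have hz : Zf i r c = 0.
  by apply/eqP; apply: contraR hact; apply: Zf_G.
rewrite hz big1 ?sub0r.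
  rewrite /Sf big1 ?oppr0 // => q _; apply: big1 => s _.
  have [->|hzs] := eqVneq (Zf (i + q.+1)%N r s) 0; first by rewrite mul0r.
  have [->|hus] := eqVneq (ustar q.+1 s c) 0; first by rewrite mulr0.
  exfalso; move/negP: hact; apply.
  rewrite -GE; apply: (@F2 i q.+1 r s c).
    by apply: hW => //; have := ltn_ord q; move: hi; lia.
  by case/andP: (ustar_act hus) => hsc _; rewrite /Al hsc orbT.
move=> q _.
have [->|hus] := eqVneq (ustar q.+1 r c) 0; first by rewrite mul0r.
case/andP: (ustar_act hus) => hu /andP [_ hqh].
rewrite del_above ?mulr0 //.
move: hact; rewrite hu /= -leqNgt => hhi.
by have := ltn_ord q; move: hi hhi; lia.
Qed.

End BWsec.
End Orders.

Section Conj.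
Variables (n : nat) (P : 'M[C]_n).
Hypothesis hP : P \in unitmx.
Definition phi (M : 'M[C]_n) := invmx P *m M *m P.
Definition psi (M : 'M[C]_n) := P *m M *m invmx P.

Lemma phiM A B : phi (A *m B) = phi A *m phi B.
Proof.
rewrite /phi !mulmxA; congr (_ *m _).
by rewrite -[invmx P *m A *m P *m invmx P]mulmxA mulmxV // mulmx1.
Qed.

Lemma phiB A B : phi (A - B) = phi A - phi B.
Proof. by rewrite /phi mulmxBr mulmxBl. Qed.

Lemma phi_sum m (F : 'I_m -> 'M[C]_n) : phi (\sum_(j < m) F j) = \sum_(j < m) phi (F j).
Proof. by rewrite /phi mulmx_sumr mulmx_suml. Qed.

Lemma phi1 : phi 1%:M = 1%:M.
Proof. by rewrite /phi mulmx1 mulVmx. Qed.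

Lemma psiphi A : psi (phi A) = A.
Proof. by rewrite /psi /phi !mulmxA mulmxV // mul1mx -mulmxA mulmxV // mulmx1. Qed.

Lemma phipsi A : phi (psi A) = A.
Proof. by rewrite /psi /phi !mulmxA mulVmx // mul1mx -mulmxA mulVmx // mulmx1. Qed.

Lemma phi_inj A B : phi A = phi B -> A = B.
Proof. by move=> e; rewrite -(psiphi A) e psiphi. Qed.

Lemma phi0 : phi 0 = 0.
Proof. by rewrite /phi mulmx0 mul0mx. Qed.

Lemma phi_dT D m : phi (dT P D m) = dg D m.
Proof.
rewrite /phi /dT /Tm /dg -scalemxAr -scalemxAl; congr (_ *: _).
by rewrite !mulmxA mulVmx // mul1mx -mulmxA mulVmx // mulmx1.
Qed.

End Conj.

Unset Implicit Arguments.
Theorem lemma3p8 (n k : nat) (P : 'M[C]_n) (D : nat -> 'rV[C]_n)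
    (le : nat -> rel (seq C)) :
  (1 < k)%N ->
  P \in unitmx ->
  Tm P D k.-1 != 0 ->
  (forall i, (i < k.-1)%N -> total_order_on (J k D i) (le i)) ->
  (forall i, (i.+1 < k.-1)%N -> forall p q, p \in J k D i -> q \in J k D i ->
      strict (le i.+1) (behead p) (behead q) -> strict (le i) p q) ->
  forall X : series n,
    (exists b : series n, inPplus k P D le b /\
        forall i, (0 < i < k)%N -> coad k b (dT P D) i = X i)
    <->
    (forall i, (0 < i < k)%N -> uplus k P D le i (X i - dT P D i)).
Proof.
case: n P D le => [|n'] P D le hk hP hT Htot Hcomp X.
  by exfalso; move/eqP: hT; apply; apply/matrixP => r; case: r.
have k0 : (0 < k)%N by lia.
split.
  case=> b [[b0 hpp] hX] i hi.
  set Y := coad k b (dT P D).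
  have hid : forall j, (0 < j < k)%N ->
      \sum_(q < k - j) phi P (Y (j + q)%N) *m phi P (b q)
      = \sum_(p < k - j) phi P (b p) *m dg D (j + p)%N.
    move=> j hj; have := L2 b0 k0 (dT P D) hj => /(congr1 (phi P)).
    rewrite !phi_sum => e; rewrite -(eq_bigr _ (fun q _ => phiM hP _ _)) e.
    by apply: eq_bigr => p _; rewrite phiM // phi_dT.
  have hb0 : phi P (b 0%N) = 1%:M by rewrite b0 phi1.
  have hAl : forall p, (0 < p < k)%N -> forall r c, phi P (b p) r c != 0 -> Al k D le p r c.
    move=> p hp r c hnz; have := hpp p hp; rewrite /pplus.
    case: ifP => hpk; last first.
      by move=> _; rewrite /Al; apply/orP; left; have := h_lt D hk r c; move/negbT: hpk; lia.
    move/forallP/(_ r)/forallP/(_ c)/implyP/(_ hnz) => hle.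
    rewrite /Al; case: (leqP (h k D r c) p) => //= hph.
    have hne : tup k D p r != tup k D p c by apply/eqP => /(Teq D hk); lia.
    by apply: (Kdown hk Hcomp (leq0n p) hpk); rewrite /strict hle hne.
  have hFW := @FW _ _ D le hk Htot Hcomp (fun p => phi P (b p)) (fun j => phi P (Y j)) hb0 hAl hid i hi.
  have hXY : phi P (X i - dT P D i) = phi P (Y i) - dg D i by rewrite phiB // -(hX i hi) phi_dT.
  rewrite /uplus; case: ifP => hik.
    apply/forallP => r; apply/forallP => c; apply/implyP; rewrite -/(phi P _) hXY => hnz.
    by case/andP: (hFW r c hnz).
  apply/eqP; apply: (phi_inj hP); rewrite phi0 hXY; apply/matrixP => r c; rewrite [in RHS]mxE.
  apply/eqP; apply: contraT => hnz; case/andP: (hFW r c hnz) => hh _.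
  by rewrite hh in hik.
move=> hU.
set W := fun i => phi P (X i).
have hW : forall i, (0 < i < k)%N -> forall r c, (W i - dg D i) r c != 0 -> G k D le i r c.
  move=> i hi r c; rewrite /W -(phi_dT hP) -phiB //.
  have := hU i hi; rewrite /uplus /G; case: ifP => hik.
    by move/forallP/(_ r)/forallP/(_ c)/implyP.
  by move/eqP => ->; rewrite phi0 mxE eqxx.
set b := fun p => psi P (bst k D le W p).
have b0 : b 0%N = 1%:M by rewrite /b /bst /= /psi mulmx1 mulmxV.
exists b; split.
  split => // i hi; rewrite /pplus; case: ifP => // hik.
  apply/forallP => r; apply/forallP => c; apply/implyP.
  rewrite -/(phi P _) /b phipsi // bstE; last by case/andP: hi.
  move/ustar_act; case/andP => hu /andP [_ hih].
  have : G k D le i r c by rewrite (GE hk Htot Hcomp) hu hih.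
  by case/andP => _ /andP [].
move=> i hi.
apply: (L3 (F := fun i => \sum_(p < k - i) b p *m dT P D (i + p)%N) b0) => //.
  by move=> j hj; exact: (L2 b0 k0 (dT P D) hj).
move=> j hj; apply: (phi_inj hP); rewrite !phi_sum.
rewrite (eq_bigr (fun q : 'I_(k - j) => W (j + q)%N *m bst k D le W q)); last first.
  by move=> q _; rewrite phiM // /b phipsi.
rewrite (bst_id hk Htot Hcomp hW hj); apply: eq_bigr => p _.
by rewrite phiM // /b phipsi // phi_dT.
exact: hi.
Qed.
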